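(* Let $(g;\Gamma)$ be a solution of the $(1,2)$-AlgDOP problem over $\mathbb{C}$ which cannot be reduced to a solution of the $(1,1)$-AlgDOP problem by a $(1,2)$-admissible change of variables, and suppose $\Gamma=y(y-p_1(x))(y-p_2(x))$ for polynomials $p_1,p_2$. Then the polynomial $p_1p_2$ has at most two distinct complex roots.
   Context: For positive reals $\mathbf w=(w_1,\dots,w_d)$, $\deg_{\mathbf w}(\sum_k a_kx^k)=\max_{a_k\ne0}\sum_i w_ik_i$, and $\mathcal P_{\mathbf w}(n;\mathbb K)$ denotes polynomials over $\mathbb K$ of $\mathbf w$-degree $\le n$. A solution of the $\mathbf w$-AlgDOP problem over $\mathbb K$ is a pair $(g,\Gamma)$, $g=(g^{ij})$ a symmetric matrix of polynomials, $\Gamma$ a polynomial, with (A1) $g^{ij}\in\mathcal P_{\mathbf w}(w_i+w_j;\mathbb K)$; (A2) $\det g\not\equiv0$ and $\Gamma$ is a square-free factor of $\det g$; (A3) $\Gamma$ divides $\sum_j g^{ij}\partial_j\Gamma$ for each $i$. In dimension 2: variables $(x,y)$, $\mathbf w=(1,w)$. A $(1,2)$-admissible change of variables is $\Phi:(x,y)\mapsto(\alpha x+\beta,\gamma y+p(x))$ with $\alpha\gamma\ne0$, $\deg p\le2$; it maps $(g,\Gamma)$ to $(\Phi_*g,\Gamma\circ\Phi^{-1})$, $\Phi_*g$ the pushforward as a contravariant 2-tensor. *)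

(* Defs.v *)
(* Polynomials in (x,y) over C are represented as {poly {poly C}}:
   the outer variable is y ('X), the inner variable is x (('X)%:P). *)
From HB Require Import structures.
From mathcomp Require Import all_boot all_order all_algebra.
From mathcomp Require Import complex.
From mathcomp Require Import Rstruct.
Set Implicit Arguments. Unset Strict Implicit. Unset Printing Implicit Defensive.
Import Order.TTheory GRing.Theory Num.Theory.
Local Open Scope ring_scope.

Notation C := (complex Rdefinitions.R).

Notation P2 := {poly {poly C}}.

Definition X2 : P2 := ('X)%:P.
Definition Y2 : P2 := 'X.

Definition coef2 (f : P2) (i j : nat) : C := (f`_j)`_i.

Definition inPw (w : nat) (n : nat) (f : P2) : Prop :=
  forall i j, coef2 f i j != 0 -> (i + w * j <= n)%N.

Definition wt (w : nat) (i : 'I_2) : nat := if val i == 0%N then 1%N else w.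

Definition dx (f : P2) : P2 := map_poly (fun q : {poly C} => q^`()) f.
Definition dy (f : P2) : P2 := f^`().
Definition dpart (j : 'I_2) (f : P2) : P2 := if val j == 0%N then dx f else dy f.

Definition dvd2 (a b : P2) : Prop := exists c : P2, b = a * c.

Definition squarefree2 (f : P2) : Prop :=
  forall h : P2, dvd2 (h * h) f -> h \is a GRing.unit.

Definition AlgDOP_solution (w : nat) (g : 'M[P2]_2) (Gamma : P2) : Prop :=
  [/\ g^T = g,
      (* (A1) *) (forall i j : 'I_2, inPw w (wt w i + wt w j) (g i j)),
      (* (A2) *) \det g != 0 /\ dvd2 Gamma (\det g) /\ squarefree2 Gamma &
      (* (A3) *) (forall i : 'I_2, dvd2 Gamma (\sum_(j < 2) g i j * dpart j Gamma))].

(* substitution f(x,y) |-> f(a(x), b(x,y)) *)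
Definition subst2 (a : {poly C}) (b : P2) (f : P2) : P2 :=
  (map_poly (fun q : {poly C} => q \Po a) f) \Po b.

(* The (1,2)-admissible change of variables
   Phi(x,y) = (al x + be, ga y + p(x)),  al ga <> 0, deg p <= 2.
   Its inverse is Phi^{-1}(x,y) = (ainv(x), binv(x,y)) with: *)
Definition ainv (al be : C) : {poly C} := al^-1 *: ('X - be%:P).
Definition binv (al be ga : C) (p : {poly C}) : P2 :=
  (ga^-1)%:P%:P * (Y2 - (p \Po ainv al be)%:P).

(* Jacobian matrix J^i_k = d Phi^i / d x^k *)
Definition jacPhi (al ga : C) (p : {poly C}) : 'M[P2]_2 :=
  \matrix_(i < 2, k < 2)
    if val i == 0%N then (if val k == 0%N then al%:P%:P else 0)
    else (if val k == 0%N then (p^`())%:P else ga%:P%:P).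

(* pushforward of the contravariant 2-tensor g:
   (Phi_* g)^{ij}(u) = J^i_k(Phi^{-1} u) J^j_l(Phi^{-1} u) g^{kl}(Phi^{-1} u) *)
Definition pushPhi (al be ga : C) (p : {poly C}) (g : 'M[P2]_2) : 'M[P2]_2 :=
  map_mx (subst2 (ainv al be) (binv al be ga p))
    (jacPhi al ga p *m g *m (jacPhi al ga p)^T).

Definition pullGamma (al be ga : C) (p : {poly C}) (Gamma : P2) : P2 :=
  subst2 (ainv al be) (binv al be ga p) Gamma.

Definition admissible12 (al be ga : C) (p : {poly C}) : Prop :=
  al != 0 /\ ga != 0 /\ (size p <= 3)%N.

Definition reducible_to_11 (g : 'M[P2]_2) (Gamma : P2) : Prop :=
  exists (al be ga : C) (p : {poly C}),
    admissible12 al be ga p /\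
    AlgDOP_solution 1 (pushPhi al be ga p g) (pullGamma al be ga p Gamma).

(* Main.v *)
Require Import Defs.
From HB Require Import structures.
From mathcomp Require Import all_boot all_order all_algebra.
From mathcomp Require Import complex Rstruct.
From mathcomp Require Import ring zify.
Import Order.TTheory GRing.Theory Num.Theory.
Local Open Scope ring_scope.

Lemma aux1 (R : comRingType) (du u X Xk q w n : R) :
  (du * (X * Xk) + u * (Xk * n)) * q = u * (X * Xk) * w ->
  ((du * X + u * n) * q) * Xk = (u * X * w) * Xk.
Proof.
by move=> E; transitivity ((du * (X * Xk) + u * (Xk * n)) * q); [ring | rewrite E; ring].
Qed.

Lemma root_of_dvd (p q w : {poly C}) z :
  p != 0 -> p^`() * q = p * w -> root p z -> root q z.
Proof.
move=> p0 E rz.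
have [m [u nuz pE]] := multiplicity_XsubC p z.
rewrite p0 /= in nuz.
case: m pE => [|k] pE.
  by move: rz; rewrite pE expr0 mulr1 (negbTE nuz).
set X := 'X - z%:P in pE.
have Xk0 : X ^+ k != 0 by rewrite expf_neq0 // polyXsubC_eq0.
move: E; rewrite pE derivM deriv_exp derivXsubC mul1r /= => E.
move: E; rewrite -mulr_natr !exprS => /aux1 E2.
have E3 := mulIf Xk0 E2.
have := congr1 (fun r => r.[z]) E3.
rewrite /= /X !hornerE hornerMn hornerC subrr !mulr0 !mul0r add0r => /eqP.
have nz : u.[z] == 0 = false by apply/negbTE.
rewrite mulf_eq0 mulf_eq0 nz /= pnatr_eq0 /=.
by move=> /eqP h; apply/rootP.
Qed.

Lemma dxD (f h : P2) : dx (f + h) = dx f + dx h.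
Proof. by apply/polyP=> i; rewrite /dx coefD !coef_map_id0 ?deriv0 // coefD derivD. Qed.
Lemma dxN (f : P2) : dx (- f) = - dx f.
Proof. by apply/polyP=> i; rewrite /dx coefN !coef_map_id0 ?deriv0 // coefN derivN. Qed.
Lemma dxB (f h : P2) : dx (f - h) = dx f - dx h.
Proof. by rewrite dxD dxN. Qed.
Lemma dxM (f h : P2) : dx (f * h) = dx f * h + f * dx h.
Proof.
apply/polyP=> i; rewrite /dx coefD !coef_map_id0 ?deriv0 // !coefM.
rewrite (raddf_sum (@deriv _)) -big_split /=.
by apply: eq_bigr => j _; rewrite derivM !coef_map_id0 ?deriv0.
Qed.
Lemma dxX : dx 'X = 0.
Proof.
apply/polyP=> i; rewrite /dx coef_map_id0 ?deriv0 // coefX coef0.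
by case: (i == 1)%N; rewrite ?derivC ?deriv0.
Qed.
Lemma dxC (c : {poly C}) : dx c%:P = (c^`())%:P.
Proof.
apply/polyP=> i; rewrite /dx coef_map_id0 ?deriv0 // !coefC.
by case: (i == 0)%N; rewrite ?deriv0.
Qed.

Lemma det2 (R : comRingType) (A : 'M[R]_2) :
  \det A = A 0 0 * A 1 1 - A 0 1 * A 1 0.
Proof.
rewrite (expand_det_row _ 0) !big_ord_recl big_ord0 /cofactor !det_mx11 !mxE /=.
have l0 : lift (0 : 'I_2) (0 : 'I_1) = 1 by apply/val_inj.
have l2 : lift (1 : 'I_2) (0 : 'I_1) = 0 by apply/val_inj.
rewrite !l0 l2 /= expr0 expr1 !mul1r mulN1r addr0.
by rewrite mulrN.
Qed.

Lemma coef_hi w n (f : P2) j : inPw w n f -> (n < w * j)%N -> f`_j = 0.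
Proof.
move=> H lt; apply/polyP=> i; rewrite coef0; apply/eqP; apply: contraT => nz.
have := leq_trans (leq_trans lt (leq_addl i _)) (H i j nz).
by rewrite ltnn.
Qed.

Lemma size_c0 w n (f : P2) : inPw w n f -> (size (f`_0)%R <= n.+1)%N.
Proof.
move=> H; apply/leq_sizeP => i lei; apply/eqP; apply: contraT => nz.
have := H i 0%N nz; rewrite muln0 addn0 => hi.
by have := leq_trans lei hi; rewrite ltnn.
Qed.

Lemma form1 (f : P2) : (forall j, (1 < j)%N -> f`_j = 0) ->
  f = (f`_0)%:P + (f`_1)%:P * 'X.
Proof.
move=> H; apply/polyP=> [[|[|j]]]; rewrite coefD coefC coefMX /=.
- by rewrite addr0.
- by rewrite coefC add0r.
- by rewrite coefC add0r H.
Qed.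

Lemma form2 (f : P2) : (forall j, (2 < j)%N -> f`_j = 0) ->
  f = (f`_0)%:P + (f`_1)%:P * 'X + (f`_2)%:P * 'X^2.
Proof.
move=> H; apply/polyP=> [[|[|[|j]]]]; rewrite !coefD coefC coefMX coefMXn /=.
all: rewrite ?coefC /= ?add0r ?addr0 //.
by rewrite H.
Qed.

Lemma X_nunit : ~~ (('X : P2) \is a GRing.unit).
Proof. by rewrite poly_unitE size_polyX. Qed.
Lemma XC_nunit (c : {poly C}) : ~~ (('X - c%:P : P2) \is a GRing.unit).
Proof. by rewrite poly_unitE size_XsubC. Qed.

Lemma gdx (R : comRingType) (x a b u v : R) :
  (0 * a + x * (0 - u)) * b + x * a * (0 - v) = - (x * u * b) - x * a * v.
Proof. ring. Qed.
Lemma gdy (R : comRingType) (x a b : R) :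
  (1 * a + x * 1) * b + x * a * 1 = a * b + x * b + x * a.
Proof. ring. Qed.
Lemma gl0 (R : comRingType) (a b d1 d2 p1 p2 : R) :
  a * (- (0 * d1 * (0 - p2)) - 0 * (0 - p1) * d2) +
  b * ((0 - p1) * (0 - p2) + 0 * (0 - p2) + 0 * (0 - p1)) = b * (p1 * p2).
Proof. ring. Qed.
Lemma gl1 (R : comRingType) (a b d1 d2 p1 p2 : R) :
  a * (- (p1 * d1 * (p1 - p2)) - p1 * (p1 - p1) * d2) +
  b * ((p1 - p1) * (p1 - p2) + p1 * (p1 - p2) + p1 * (p1 - p1)) =
  p1 * (p1 - p2) * (b - d1 * a).
Proof. ring. Qed.
Lemma gl2 (R : comRingType) (a b d1 d2 p1 p2 : R) :
  a * (- (p2 * d1 * (p2 - p2)) - p2 * (p2 - p1) * d2) +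
  b * ((p2 - p1) * (p2 - p2) + p2 * (p2 - p2) + p2 * (p2 - p1)) =
  p2 * (p2 - p1) * (b - d2 * a).
Proof. ring. Qed.

Lemma evalS (Ga Gb : P2) (p1 p2 e : {poly C}) :
  let G := Y2 * (Y2 - p1%:P) * (Y2 - p2%:P) in
  dvd2 G (Ga * dx G + Gb * dy G) ->
  e * (e - p1) * (e - p2) = 0 ->
  Ga.[e] * (- (e * p1^`() * (e - p2)) - e * (e - p1) * p2^`()) +
  Gb.[e] * ((e - p1) * (e - p2) + e * (e - p2) + e * (e - p1)) = 0.
Proof.
move=> G [h hE] ez.
have dxG : dx G = - ('X * (p1^`())%:P * ('X - p2%:P)) -
                  'X * ('X - p1%:P) * (p2^`())%:P.
  by rewrite /G /Y2 !dxM !dxB dxX !dxC gdx.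
have dyG : dy G = ('X - p1%:P) * ('X - p2%:P) + 'X * ('X - p2%:P) +
                  'X * ('X - p1%:P).
  by rewrite /G /Y2 /dy !derivM derivX !derivXsubC gdy.
have := congr1 (fun f => f.[e]) hE.
rewrite /= hornerM /G /Y2 !hornerE ez mul0r dxG dyG.
by rewrite !hornerE.
Qed.

Lemma ev_all (Ga Gb : P2) (p1 p2 : {poly C}) :
  p1 != 0 -> p2 != 0 -> p1 - p2 != 0 ->
  let G := Y2 * (Y2 - p1%:P) * (Y2 - p2%:P) in
  dvd2 G (Ga * dx G + Gb * dy G) ->
  [/\ Gb`_0 = 0, Gb.[p1] = p1^`() * Ga.[p1] & Gb.[p2] = p2^`() * Ga.[p2]].
Proof.
move=> n1 n2 n12 G S.
have n21 : p2 - p1 != 0 by rewrite -opprB oppr_eq0.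
split.
- have ez : (0:{poly C}) * (0 - p1) * (0 - p2) = 0 by rewrite !mul0r.
  have := evalS Ga Gb p1 p2 0 S ez.
  rewrite gl0 => /eqP; rewrite mulf_eq0 mulf_eq0 (negbTE n1) (negbTE n2) orbF.
  by rewrite horner_coef0 ?orbF => /eqP.
- have ez : p1 * (p1 - p1) * (p1 - p2) = 0 by rewrite subrr mulr0 mul0r.
  have := evalS Ga Gb p1 p2 p1 S ez.
  rewrite gl1 => /eqP; rewrite mulf_eq0 mulf_eq0 (negbTE n1) (negbTE n12) /=.
  by rewrite subr_eq0 => /eqP.
- have ez : p2 * (p2 - p1) * (p2 - p2) = 0 by rewrite subrr mulr0.
  have := evalS Ga Gb p1 p2 p2 S ez.
  rewrite gl2 => /eqP; rewrite mulf_eq0 mulf_eq0 (negbTE n2) (negbTE n21) /=.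
  by rewrite subr_eq0 => /eqP.
Qed.

Lemma gq (R : comRingType) (c p d q D : R) :
  c * p = d * (q + D * p) -> d * q = p * (c - d * D).
Proof. by move=> E; transitivity (d * (q + D * p) - d * D * p); [ring | rewrite -E; ring]. Qed.

Lemma gfin (R : idomainType) (D a b c d1 d2 p1 p2 : R) :
  p1 - p2 != 0 -> c = d1 * D -> c = d2 * D ->
  b + a * p1 = d1 * c -> b + a * p2 = d2 * c -> D * a = 0 /\ D * b = c * c.
Proof.
move=> n12 e1 e2 f1 f2.
have h1 : D * (b + a * p1) = c * c by rewrite f1 {2}e1; ring.
have h2 : D * (b + a * p2) = c * c by rewrite f2 {2}e2; ring.
have h3 : D * a * (p1 - p2) = 0.
  by transitivity (D * (b + a * p1) - D * (b + a * p2)); [ring | rewrite h1 h2 subrr].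
have Da : D * a = 0 by move/eqP: h3; rewrite mulf_eq0 (negbTE n12) orbF => /eqP.
split=> //.
by transitivity (D * (b + a * p1) - D * a * p1); [ring | rewrite h1 Da mul0r subr0].
Qed.

Lemma gdet (R : comRingType) (Dp bp ap cp x : R) :
  Dp * bp = cp * cp -> Dp * ap = 0 ->
  Dp * x * (bp * x + ap * x ^+ 2) - cp * x * (cp * x) = 0.
Proof.
move=> h1 h2.
transitivity ((Dp * bp) * x ^+ 2 + (Dp * ap) * x ^+ 3 - cp * cp * x ^+ 2); first by ring.
by rewrite h1 h2; ring.
Qed.

Theorem lemma5p6 (g : 'M[P2]_2) (Gamma : P2) (p1 p2 : {poly C}) :
  AlgDOP_solution 2 g Gamma ->
  ~ reducible_to_11 g Gamma ->
  Gamma = Y2 * (Y2 - p1%:P) * (Y2 - p2%:P) ->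
  exists s : seq C, (size s <= 2)%N /\ (forall z : C, root (p1 * p2) z -> z \in s).
Proof.
move=> [gT A1 [det0 [_ sqf]] A3] _ GE.
have g10 : g 1 0 = g 0 1 by rewrite -[in LHS]gT mxE.
have p1n0 : p1 != 0.
  apply/eqP => e; apply: (negP X_nunit); apply: sqf; exists ('X - p2%:P).
  by rewrite GE /Y2 e polyC0 subr0.
have p2n0 : p2 != 0.
  apply/eqP => e; apply: (negP X_nunit); apply: sqf; exists ('X - p1%:P).
  by rewrite GE /Y2 e polyC0 subr0 mulrAC.
have p12 : p1 - p2 != 0.
  apply/eqP => e; have e' : p2 = p1 by apply/esym/subr0_eq.
  apply: (negP (XC_nunit p1)); apply: sqf; exists Y2.
  by rewrite GE e' [RHS]mulrC mulrA.
have l : lift (ord0 : 'I_2) (ord0 : 'I_1) = 1 by apply/val_inj.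
have S0 := A3 0; have S1 := A3 1.
rewrite !big_ord_recl big_ord0 addr0 l /dpart /= GE in S0.
rewrite !big_ord_recl big_ord0 addr0 l /dpart /= GE in S1.
have [H01_0 E01a E01b] := @ev_all (g 0 0) (g 0 1) p1 p2 p1n0 p2n0 p12 S0.
have [H11_0 E11a E11b] := @ev_all (g 1 0) (g 1 1) p1 p2 p1n0 p2n0 p12 S1.
rewrite g10 in E11a E11b.
have F00 : g 0 0 = ((g 0 0)`_0)%:P + ((g 0 0)`_1)%:P * 'X.
  by apply: form1 => j lt; apply: (@coef_hi _ _ _ j (A1 0 0)); rewrite /wt /=; lia.
have F01 : g 0 1 = ((g 0 1)`_0)%:P + ((g 0 1)`_1)%:P * 'X.
  by apply: form1 => j lt; apply: (@coef_hi _ _ _ j (A1 0 1)); rewrite /wt /=; lia.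
have F11 : g 1 1 = ((g 1 1)`_0)%:P + ((g 1 1)`_1)%:P * 'X + ((g 1 1)`_2)%:P * 'X^2.
  by apply: form2 => j lt; apply: (@coef_hi _ _ _ j (A1 1 1)); rewrite /wt /=; lia.
have sq := @size_c0 _ _ _ (A1 0 0); rewrite /wt /= in sq.
rewrite H01_0 in F01; rewrite H11_0 in F11.
set q := (g 0 0)`_0 in F00 sq.
set D := (g 0 0)`_1 in F00.
set c := (g 0 1)`_1 in F01.
set b := (g 1 1)`_1 in F11.
set a := (g 1 1)`_2 in F11.
rewrite F00 F01 !hornerE in E01a E01b.
rewrite F11 F01 !hornerE in E11a E11b.
have f1 : b + a * p1 = p1^`() * c.
  by apply: (mulIf p1n0); rewrite /= mulrDl.
have f2 : b + a * p2 = p2^`() * c.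
  by apply: (mulIf p2n0); rewrite /= mulrDl.
case: (eqVneq q 0) => [q0 | qn0].
  have e1 : c = p1^`() * D.
    by apply: (mulIf p1n0); rewrite /= E01a q0 add0r mulrA.
  have e2 : c = p2^`() * D.
    by apply: (mulIf p2n0); rewrite /= E01b q0 add0r mulrA.
  have [Da Db] := @gfin _ D a b c _ _ p1 p2 p12 e1 e2 f1 f2.
  move/negP: det0 => det0; exfalso; apply: det0; apply/eqP.
  rewrite det2 g10 F00 F01 F11 q0 !polyC0 !add0r.
  by apply: gdet; rewrite -!polyCM ?Db ?Da ?polyC0.
have [s sE] := closed_field_poly_normal q.
have lq0 : lead_coef q != 0 by rewrite lead_coef_eq0.
exists s; split.
  have := congr1 (fun r : {poly C} => size r) sE; rewrite /= size_scale // size_prod_XsubC.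
  move=> hs; move: sq; rewrite hs; lia.
move=> z; rewrite rootM => /orP [] rz.
- have := @root_of_dvd p1 q _ z p1n0 (@gq _ _ _ _ _ _ E01a) rz.
  by rewrite sE rootZ // root_prod_XsubC.
- have := @root_of_dvd p2 q _ z p2n0 (@gq _ _ _ _ _ _ E01b) rz.
  by rewrite sE rootZ // root_prod_XsubC.
Qed.
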